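(* Let $\mathcal A=(Q,\Sigma,\delta,\rho)$ be a connected bireversible Mealy automaton whose labeled orbit tree $\mathfrak t(\mathcal A)$ has no active self-liftable branch, let $\mathfrak j$ be a jungle tree of $\mathfrak t(\mathcal A)$ with trunk of length $n$, and let $S$ be a liana covering up $\mathfrak j$. Then for all $\mathbf t,\mathbf u,\mathbf v\in Q^*$ with $\mathbf{tuv}\in S$, there exists $\mathbf w\in Q^*$ such that $\mathbf{tuvwu}\in S$.
   Context: Mealy automata. A Mealy automaton is $\mathcal A=(Q,\Sigma,\delta,\rho)$ with $Q,\Sigma$ finite non-empty sets, $\delta=(\delta_i\colon Q\to Q)_{i\in\Sigma}$, $\rho=(\rho_x\colon\Sigma\to\Sigma)_{x\in Q}$; it has a transition $x\xrightarrow{i\mid\rho_x(i)}\delta_i(x)$ for each $x,i$. It is invertible if each $\rho_x$ is a permutation of $\Sigma$, reversible if each $\delta_i$ is a permutation of $Q$, bireversible if it is invertible, reversible, and for each $j\in\Sigma$ the map $x\mapsto\delta_{\rho_x^{-1}(j)}(x)$ is a permutation of $Q$. It is connected if the directed graph on $Q$ with edges $x\to\delta_i(x)$ is connected. Extensions: $\rho_x(i\mathbf s)=\rho_x(i)\rho_{\delta_i(x)}(\mathbf s)$ on $\Sigma^*$; for $\mathbf u=x_1\cdots x_m$, $\rho_{\mathbf u}=\rho_{x_m}\circ\cdots\circ\rho_{x_1}$; dually $\delta_i(x\mathbf u)=\delta_i(x)\delta_{\rho_x(i)}(\mathbf u)$ on $Q^*$, $\delta_{i_1\cdots i_m}=\delta_{i_m}\circ\cdots\circ\delta_{i_1}$.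 The $n$-th power $\mathcal A^n$ has stateset $Q^n$ and transitions $\mathbf u\xrightarrow{i\mid\rho_{\mathbf u}(i)}\delta_i(\mathbf u)$; for reversible $\mathcal A$ its connected components are the orbits of $Q^n$ under the maps $\delta_{\mathbf s}$, $\mathbf s\in\Sigma^*$. Orbit tree. For reversible $\mathcal A$, $\mathfrak t(\mathcal A)$ is the rooted tree whose vertices at level $n\ge0$ are the connected components of $\mathcal A^n$, with an edge from the component of $\mathbf u\in Q^n$ to the component of $\mathbf ux$ for all $\mathbf u\in Q^n$, $x\in Q$; the edge $C\to D$ is labeled $\#D/\#C$. Paths go downward; $\top,\bot$ denote first and last vertex of a path; the level of an edge/path is that of its top vertex. A word in $Q^*\cup Q^\omega$ represents the initial path through the components of its prefixes. Edge $e$ is liftable to edge $f$ if every word of $\bot(e)$ has a suffix in $\bot(f)$; a path $(e_i)_{i\in I}$ is liftable to $(f_i)_{i\in I}$ if each $e_i$ is liftable to $f_i$. An edge $f$ is a legitimate child of $e$ if $\top(f)=\bot(e)$ and $f$ is liftable to $e$. A path or subtree $\mathfrak s$ is $k$-self-liftable ($k>0$) if for every $i\ge0$ every path in $\mathfrak s$ starting at level $i+k$ is liftable to a path in $\mathfrak s$ starting at level $i$; self-liftable if $k$-self-liftable for some $k>0$. A branch is an infinite initial path; active if its label sequence is not eventually constantly $1$. Jungle trees. Let $\mathbf e$ be a finite 1-self-liftable initial path of length $n$ whose last edge has at least two legitimate children, all of label $1$. The jungle tree $\mathfrak j(\mathbf e)$ consists of $\mathbf e$ (its trunk) together with all edges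 that are descendants of $\bot(\mathbf e)$ and liftable to the last edge of $\mathbf e$. Stems are the words of $\bot(\mathbf e)\subseteq Q^n$. A $\mathfrak j$-word is a word of $Q^*\cup Q^\omega$ representing an initial path of $\mathfrak j$. A liana covering up $\mathfrak j$ is a set $S=\mathbf w L_{\mathbf w}$ (together with the prefixes of $\mathbf w$) of $\mathfrak j$-words, where $\mathbf w\in Q^n$ is a stem and $L_{\mathbf w}\subseteq Q^*\cup Q^\omega$ is prefix-closed, such that each vertex of $\mathfrak j$ is represented by exactly one word of $S$ (equivalently, $L_{\mathbf w}$ viewed as a tree is regular of the same arity as $\mathfrak j$, the arity being the number of legitimate children of the last trunk edge). *)

(* Defs.v *)
From HB Require Import structures.
From mathcomp Require Import all_boot all_order all_algebra.
From mathcomp Require Import boolp.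
Set Implicit Arguments. Unset Strict Implicit. Unset Printing Implicit Defensive.

(* A Mealy automaton (Q, Sigma, delta, rho) is given by finite types Q, Sig and
   delta i : Q -> Q (i : Sig), rho x : Sig -> Sig (x : Q);
   transition x --i|rho x i--> delta i x. *)
Section Mealy.
Variables (Q Sig : finType) (delta : Sig -> Q -> Q) (rho : Q -> Sig -> Sig).

Definition invertible := forall x : Q, bijective (rho x).
Definition reversible := forall i : Sig, bijective (delta i).
(* rho_x^{-1}(j) (meaningful when rho x is a permutation) *)
Definition rho_inv (x : Q) (j : Sig) : Sig := odflt j [pick i | rho x i == j].
Definition bireversible :=
  [/\ invertible, reversible & forall j : Sig, bijective (fun x => delta (rho_inv x j) x)].

Definition qedge : rel Q := fun x y => [exists i, delta i x == y].
Definition connected_automaton :=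
  forall x y : Q, connect (fun a b => qedge a b || qedge b a) x y.

Fixpoint dw (i : Sig) (u : seq Q) : seq Q :=
  if u is x :: u' then delta i x :: dw (rho x i) u' else [::].
Definition ds (s : seq Sig) (u : seq Q) : seq Q := foldl (fun w i => dw i w) u s.

(* vertices of the orbit tree: orbits of Q^n under the delta_s, s in Sig^* *)
Definition same_comp (u v : seq Q) := exists s : seq Sig, ds s u = v.
Definition compset (u : seq Q) : {set (size u).-tuple Q} :=
  [set t | `[< exists s : seq Sig, ds s u = tval t >]].

(* Edges are represented by a word of their bottom vertex; the top vertex is
   the component of its prefix of length one less.  Label = #bottom/#top. *)
Definition label (u w : seq Q) : rat := ((#|compset w|)%:R / (#|compset u|)%:R)%R.
Definition edge_label (w : seq Q) : rat := label (take (size w).-1 w) w.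

Definition liftable (e f : seq Q) :=
  forall w, same_comp e w -> exists p s, w = p ++ s /\ same_comp f s.

(* a branch: sequence of vertices (given by representatives b l of length l),
   b (l+1) being a child of b l *)
Definition branch (b : nat -> seq Q) :=
  forall l, size (b l) = l /\
            exists u x, same_comp u (b l) /\ same_comp (rcons u x) (b l.+1).
Definition branch_label (b : nat -> seq Q) (l : nat) : rat := label (b l) (b l.+1).
Definition active_branch (b : nat -> seq Q) :=
  ~ exists N, forall l, (N <= l)%N -> branch_label b l = 1%R.
(* edge of b at level l has bottom b (l+1); paths in a path are its segments,
   and segment lifting is edgewise *)
Definition self_liftable_branch (b : nat -> seq Q) :=
  exists k, (0 < k)%N /\
    forall i l, liftable (b (i + k + l).+1) (b (i + l).+1).

(* finite initial path represented by a word e (its edges at level j < size e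
   have bottom vertex the component of take j.+1 e) *)
Definition one_self_liftable (e : seq Q) :=
  forall i l, (i + 1 + l < size e)%N -> liftable (take (i + 1 + l).+1 e) (take (i + l).+1 e).

Definition legit_child_last (e f : seq Q) :=
  [/\ size f = (size e).+1, same_comp (take (size e) f) e & liftable f e].

Definition jungle_trunk (e : seq Q) :=
  [/\ (0 < size e)%N, one_self_liftable e,
      (exists f1 f2, [/\ legit_child_last e f1, legit_child_last e f2 & ~ same_comp f1 f2])
    & (forall f, legit_child_last e f -> edge_label f = 1%R)].

Definition in_jungle (e w : seq Q) :=
  ((0 < size w <= size e)%N /\ same_comp w (take (size w) e)) \/
  [/\ (size e < size w)%N, same_comp (take (size e) w) e & liftable w e].

Definition jword (e w : seq Q) :=
  forall l, (0 < l <= size w)%N -> in_jungle e (take l w).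

(* a liana covering up j(e) (finite words part) *)
Definition liana (e : seq Q) (S : seq Q -> Prop) :=
  exists (w : seq Q) (L : seq Q -> Prop),
    [/\ same_comp w e,
        (forall l l', L (l ++ l') -> L l),
        (forall s, S s <-> (prefix s w \/ exists l, L l /\ s = w ++ l)),
        (forall s, S s -> jword e s)
      & (forall v, jword e v -> exists! s, S s /\ same_comp s v)].

End Mealy.

(* Main.v *)
Require Import Defs.
From mathcomp Require Import all_boot all_order all_algebra boolp.
From mathcomp Require Import fingroup perm.
From mathcomp Require Import zify.
Set Implicit Arguments. Unset Strict Implicit. Unset Printing Implicit Defensive.


Section Basic.
Variables (Q Sig : finType) (delta : Sig -> Q -> Q) (rho : Q -> Sig -> Sig).
Local Notation DW := (dw delta rho).
Local Notation DS := (ds delta rho).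
Local Notation SC := (same_comp delta rho).

Fixpoint fin (i : Sig) (u : seq Q) : Sig :=
  if u is x :: u' then fin (rho x i) u' else i.
Fixpoint outw (u : seq Q) (s : seq Sig) : seq Sig :=
  if s is i :: s' then fin i u :: outw (DW i u) s' else [::].

Lemma size_dw i u : size (DW i u) = size u.
Proof. by elim: u i => [|x u IH] i //=; rewrite IH. Qed.

Lemma size_ds s u : size (DS s u) = size u.
Proof. by elim: s u => [|i s IH] u //=; rewrite IH size_dw. Qed.

Lemma ds_cons i s u : DS (i :: s) u = DS s (DW i u).
Proof. by []. Qed.

Lemma ds_cat2 s1 s2 u : DS (s1 ++ s2) u = DS s2 (DS s1 u).
Proof. by rewrite /ds foldl_cat. Qed.

Lemma dw_cat i u v : DW i (u ++ v) = DW i u ++ DW (fin i u) v.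
Proof. by elim: u i => [|x u IH] i //=; rewrite IH. Qed.

Lemma ds_cat s u v : DS s (u ++ v) = DS s u ++ DS (outw u s) v.
Proof.
elim: s u v => [|i s IH] u v //.
by rewrite [outw _ _]/= !ds_cons dw_cat IH.
Qed.

Lemma take_ds s k u : take k (DS s u) = DS s (take k u).
Proof.
case: (leqP k (size u)) => hk.
  rewrite -{1}(cat_take_drop k u) ds_cat take_size_cat //.
  by rewrite size_ds size_take; case: ltngtP hk => //; lia.
by rewrite !take_oversize ?size_ds //; lia.
Qed.

Lemma drop_ds s k u : (k <= size u)%N ->
  drop k (DS s u) = DS (outw (take k u) s) (drop k u).
Proof.
move=> hk; rewrite -{1}(cat_take_drop k u) ds_cat drop_size_cat //.
by rewrite size_ds size_take; case: ltngtP hk => //; lia.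
Qed.

Lemma sc_refl u : SC u u. Proof. by exists [::]. Qed.
Lemma sc_trans u v w : SC u v -> SC v w -> SC u w.
Proof. by case=> s1 <- [s2 <-]; exists (s1 ++ s2); rewrite ds_cat2. Qed.
Lemma sc_size u v : SC u v -> size v = size u.
Proof. by case=> s <-; rewrite size_ds. Qed.
Lemma sc_take k u v : SC u v -> SC (take k u) (take k v).
Proof. by case=> s <-; exists s; rewrite take_ds. Qed.

Lemma inj_period (T : finType) (f : T -> T) : injective f ->
  forall x, exists m, iter m.+1 f x = x.
Proof.
move=> fi x; pose p : {perm T} := perm fi.
exists #[p]%g.-1.
rewrite prednK ?order_gt0 //.
have := permX p x #[p]%g.
rewrite expg_order perm1 => h; rewrite {2}h.
by apply: eq_iter => y; rewrite permE.
Qed.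

Hypothesis rev : reversible delta.

Lemma dw_inj_all u : forall i v, DW i u = DW i v -> u = v.
Proof.
elim: u => [|x u IH] i [|y v] //= [h1 h2].
have [g gK _] := rev i.
have exy : x = y by have := congr1 g h1; rewrite !gK.
by subst y; rewrite (IH _ _ h2).
Qed.
Lemma dw_inj i : injective (DW i).
Proof. by move=> u v; apply: dw_inj_all. Qed.
Lemma ds_inj s : injective (DS s).
Proof. by elim: s => [|i s IH] u v //= /IH /dw_inj. Qed.

Lemma sc_sym u v : SC u v -> SC v u.
Proof.
case=> s <-.
pose F (t : (size u).-tuple Q) : (size u).-tuple Q := insubd t (DS s t).
have vF t : val (F t) = DS s t by rewrite val_insubd size_ds size_tuple eqxx.
have Fi : injective F.
  by move=> t1 t2 /(congr1 val); rewrite !vF => /ds_inj /val_inj.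
have [m hm] := inj_period Fi (in_tuple u).
have itF k t : val (iter k F t) = DS (flatten (nseq k s)) t.
  elim: k => [|k IH] //=; rewrite vF IH.
  rewrite -ds_cat2; congr DS => /=; elim: (k) => [|j IHj] /=; first by rewrite cats0.
  by rewrite -catA IHj.
exists (flatten (nseq m s)).
have h := congr1 val hm; rewrite itF /= in h.
by rewrite -ds_cat2.
Qed.

End Basic.

Import GRing.Theory Num.Theory.

Lemma card_inj (T U : finType) (A : {set T}) (B : {set U}) (F : T -> U) :
  B \subset F @: A -> #|A| = #|B| -> {in A &, injective F}.
Proof.
move=> sB eAB; apply/imset_injP; rewrite eqn_leq leq_imset_card /= eAB.
exact: subset_leq_card.
Qed.

Section Card.
Variables (Q Sig : finType) (delta : Sig -> Q -> Q) (rho : Q -> Sig -> Sig).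
Local Notation DW := (dw delta rho).
Local Notation DS := (ds delta rho).
Local Notation SC := (same_comp delta rho).
Hypothesis inv : invertible rho.
Hypothesis rev : reversible delta.

Lemma fin_surj u j : exists i, fin rho i u = j.
Proof.
elim: u j => [|x u IH] j; first by exists j.
have [i' hi'] := IH j; have [g _ gK] := inv x.
by exists (g i') => /=; rewrite gK.
Qed.

Lemma outw_surj u s' : exists s, outw delta rho u s = s'.
Proof.
elim: s' u => [|j s' IH] u; first by exists [::].
have [i hi] := fin_surj u j; have [s hs] := IH (DW i u).
by exists (i :: s) => /=; rewrite hi hs.
Qed.

Definition Cs m u := [set t : m.-tuple Q | `[< SC u (val t) >]].

Lemma card_compset m u : size u = m -> #|compset delta rho u| = #|Cs m u|.
Proof. by move=> H; subst m. Qed.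

Lemma card_sc u v : SC u v -> #|compset delta rho u| = #|compset delta rho v|.
Proof.
move=> huv; rewrite (card_compset (erefl (size u))).
rewrite (card_compset (sc_size huv)); congr #|pred_of_set _|.
apply/setP => t; rewrite !inE; apply/asboolP/asboolP => h.
  exact: sc_trans (sc_sym rev huv) h.
exact: sc_trans huv h.
Qed.

Definition tupw (z : seq Q) (s : seq Sig) : (size z).-tuple Q := insubd (in_tuple z) (DS s z).
Lemma val_tupw z s : val (tupw z s) = DS s z.
Proof. by rewrite val_insubd size_ds eqxx. Qed.
Lemma tupw_in z s : tupw z s \in compset delta rho z.
Proof. by rewrite inE; apply/asboolP; exists s; rewrite val_tupw. Qed.

Lemma head_inj z k : #|compset delta rho z| = #|compset delta rho (take k z)| ->
  forall s1 s2, take k (DS s1 z) = take k (DS s2 z) -> DS s1 z = DS s2 z.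
Proof.
move=> hc s1 s2 h.
pose F (t : (size z).-tuple Q) : (size (take k z)).-tuple Q :=
  insubd (in_tuple (take k z)) (take k (val t)).
have vF t : val (F t) = take k (val t).
  by rewrite val_insubd ifT // !size_take size_tuple.
have Fi : {in compset delta rho z &, injective F}.
  apply: card_inj hc; apply/subsetP => t; rewrite inE => /asboolP [s hs].
  apply/imsetP; exists (tupw z s); first exact: tupw_in.
  by apply: val_inj; rewrite vF val_tupw take_ds hs.
have := Fi _ _ (tupw_in z s1) (tupw_in z s2).
rewrite -!val_tupw => -> //; apply: val_inj; by rewrite !vF !val_tupw.
Qed.

Lemma tail_inj z : (0 < size z)%N ->
  #|compset delta rho z| = #|compset delta rho (drop 1 z)| ->
  forall s1 s2, drop 1 (DS s1 z) = drop 1 (DS s2 z) -> DS s1 z = DS s2 z.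
Proof.
move=> z0 hc s1 s2 h.
pose F (t : (size z).-tuple Q) : (size (drop 1 z)).-tuple Q :=
  insubd (in_tuple (drop 1 z)) (drop 1 (val t)).
have vF t : val (F t) = drop 1 (val t).
  by rewrite val_insubd ifT // !size_drop size_tuple.
have Fi : {in compset delta rho z &, injective F}.
  apply: card_inj hc; apply/subsetP => t; rewrite inE => /asboolP [s hs].
  have [s0 hs0] := outw_surj (take 1 z) s.
  apply/imsetP; exists (tupw z s0); first exact: tupw_in.
  by apply: val_inj; rewrite vF val_tupw drop_ds // hs0 hs.
have := Fi _ _ (tupw_in z s1) (tupw_in z s2).
rewrite -!val_tupw => -> //; apply: val_inj; by rewrite !vF !val_tupw.
Qed.

End Card.

Import GRing.Theory Num.Theory.

Section Jungle.
Variables (Q Sig : finType) (delta : Sig -> Q -> Q) (rho : Q -> Sig -> Sig).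
Local Notation DW := (dw delta rho).
Local Notation DS := (ds delta rho).
Local Notation SC := (same_comp delta rho).
Hypothesis inv : invertible rho.
Hypothesis rev : reversible delta.
Variable e : seq Q.
Local Notation n := (size e).
Hypothesis n0 : (0 < n)%N.
Hypothesis trunk1 : one_self_liftable delta rho e.
Local Notation C := (legit_child_last delta rho e).
Hypothesis lab : forall f, C f -> edge_label delta rho f = 1%R.

Lemma C_size z : C z -> size z = n.+1. Proof. by case. Qed.
Lemma C_head z : C z -> SC e (take n z).
Proof. by case=> _ h _; apply: sc_sym. Qed.
Lemma C_tail z : C z -> SC e (drop 1 z).
Proof.
case=> hs _ hl; have [p [s [hz hs']]] := hl z (sc_refl _ _ _).
have ss : size s = n by rewrite (sc_size hs').
suff -> : drop 1 z = s by [].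
have sp : size p = 1 by move: (congr1 size hz); rewrite size_cat hs ss; lia.
by rewrite hz drop_size_cat.
Qed.
Lemma C_sc z z' : C z -> SC z z' -> C z'.
Proof.
case=> hs hh hl hzz'; split.
- by rewrite (sc_size hzz').
- apply: sc_trans hh; apply: sc_sym => //; exact: sc_take.
- by move=> w hw; apply: hl; apply: sc_trans hzz' hw.
Qed.
Lemma C_card z : C z -> #|compset delta rho z| = #|compset delta rho (take n z)|.
Proof.
move=> hz; have := lab hz; rewrite /edge_label /label.
have -> : (size z).-1 = n by rewrite (C_size hz).
by move/divr1_eq/eqP; rewrite eqr_nat => /eqP.
Qed.
Lemma C_headinj z s1 s2 : C z -> take n (DS s1 z) = take n (DS s2 z) -> DS s1 z = DS s2 z.
Proof. move=> hz; exact: (head_inj (C_card hz)). Qed.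
Lemma C_tailinj z s1 s2 : C z -> drop 1 (DS s1 z) = drop 1 (DS s2 z) -> DS s1 z = DS s2 z.
Proof.
move=> hz; apply: tail_inj => //; first by rewrite (C_size hz).
rewrite (C_card hz); apply: card_sc => //.
apply: sc_trans (sc_sym rev (C_head hz)) (C_tail hz).
Qed.

End Jungle.


Lemma drop_take_ (T : Type) k l (X : seq T) : (k <= l)%N ->
  drop k (take l X) = take (l - k) (drop k X).
Proof. by move=> h; rewrite take_drop subnK. Qed.

Section Jw.
Variables (Q Sig : finType) (delta : Sig -> Q -> Q) (rho : Q -> Sig -> Sig).
Local Notation DW := (dw delta rho).
Local Notation DS := (ds delta rho).
Local Notation SC := (same_comp delta rho).
Hypothesis inv : invertible rho.
Hypothesis rev : reversible delta.
Variable e : seq Q.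
Local Notation n := (size e).
Hypothesis n0 : (0 < n)%N.
Local Notation C := (legit_child_last delta rho e).

Definition Jw W := [/\ (n <= size W)%N, SC e (take n W) &
  forall k, (k + n < size W)%N -> C (take n.+1 (drop k W))].
Definition lastnD (W : seq Q) := drop (size W - n) W.

Lemma Jw_state W k : Jw W -> (k + n <= size W)%N -> SC e (take n (drop k W)).
Proof.
case=> hs h0 hw hk; case: k hk => [|k] hk; first by rewrite drop0.
case: (ltngtP (k.+1 + n) (size W)) hk => // hk _.
  have := C_head rev (hw _ hk); by rewrite take_takel.
have hk' : (k + n < size W)%N by lia.
have := C_tail n0 (hw _ hk').
by rewrite -[n.+1]addn1 -take_drop drop_drop add1n.
Qed.

Lemma Jw_factor W i l : Jw W -> (i + l <= size W)%N -> (n <= l)%N ->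
  Jw (take l (drop i W)).
Proof.
move=> hW hil hl; have [hs h0 hw] := hW.
have sz : size (take l (drop i W)) = l by rewrite size_takel // size_drop; lia.
split; first by rewrite sz.
  by rewrite take_takel //; apply: Jw_state => //; lia.
move=> k; rewrite sz => hk.
rewrite drop_take_; last by lia.
rewrite take_takel; last by lia.
rewrite drop_drop; apply: hw; lia.
Qed.

Lemma Jw_C z : C z -> Jw z.
Proof.
move=> hz; have sz := C_size hz; split; first by rewrite sz.
  exact: (C_head rev hz).
move=> k; rewrite sz => hk; have -> : k = 0 by lia.
by rewrite drop0 take_oversize // sz.
Qed.

Lemma Jw_glue X Y : Jw X -> Jw Y -> lastnD X = take n Y ->
  Jw (X ++ drop n Y) /\ lastnD (X ++ drop n Y) = lastnD Y.
Proof.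
move=> [hsX h0X hwX] [hsY h0Y hwY] hXY.
set A := take (size X - n) X.
have EX : X = A ++ take n Y by rewrite -hXY /A cat_take_drop.
have sA : size A = (size X - n)%N by rewrite size_takel //; lia.
have E : X ++ drop n Y = A ++ Y by rewrite {1}EX -catA cat_take_drop.
have szE : size (A ++ Y) = (size A + size Y)%N by rewrite size_cat.
rewrite E; split; first split.
- rewrite szE; lia.
- by rewrite -E takel_cat.
- move=> k; rewrite szE => hk.
  case: (ltnP k (size A)) => hkA.
    rewrite -E drop_cat ifT; last by lia.
    rewrite takel_cat; last by rewrite size_drop; lia.
    apply: hwX; lia.
  rewrite drop_cat ifF; last by apply/negbTE; rewrite -leqNgt.
  apply: hwY; lia.
- rewrite /lastnD szE drop_cat ifF; last by apply/negbTE; rewrite -leqNgt; lia.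
  congr drop; lia.
Qed.

End Jw.


Section JJ.
Variables (Q Sig : finType) (delta : Sig -> Q -> Q) (rho : Q -> Sig -> Sig).
Local Notation DW := (dw delta rho).
Local Notation DS := (ds delta rho).
Local Notation SC := (same_comp delta rho).
Hypothesis inv : invertible rho.
Hypothesis rev : reversible delta.
Variable e : seq Q.
Local Notation n := (size e).
Hypothesis n0 : (0 < n)%N.
Hypothesis trunk1 : one_self_liftable delta rho e.
Local Notation C := (legit_child_last delta rho e).
Local Notation J := (jword delta rho e).
Local Notation Jw := (Jw delta rho e).

Lemma J_long W l : J W -> (n < l <= size W)%N -> liftable delta rho (take l W) e.
Proof.
move=> hJ hl; have := hJ l; rewrite (_ : (0 < l <= size W)%N); last by lia.
move=> /(_ isT) [[h1 _]|[_ _ h3]//]; move: h1; rewrite size_takel; lia.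
Qed.

Lemma lift_self w f : liftable delta rho w f -> (size f <= size w)%N ->
  SC f (drop (size w - size f) w).
Proof.
move=> hl hs; have [p [s [hw hs']]] := hl w (sc_refl _ _ _).
have ss : size s = size f by rewrite (sc_size hs').
have sp : size p = (size w - size f)%N by move: (congr1 size hw); rewrite size_cat ss; lia.
by rewrite -sp hw drop_size_cat.
Qed.

Lemma J_factor W k l : J W -> (k + l <= size W)%N -> (l <= n)%N ->
  SC (take l (drop k W)) (take l e).
Proof.
move=> hJ; elim: k l => [|k IH] l hkl hln.
  case: l hkl hln => [|l] hkl hln; first by rewrite !take0; apply: sc_refl.
  rewrite drop0; have := hJ l.+1; rewrite (_ : (0 < l.+1 <= size W)%N); last by lia.
  move=> /(_ isT) [[_ h]|[]]; last by rewrite size_takel; lia.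
  by move: h; rewrite size_takel //; lia.
case: l hkl hln => [|l] hkl hln; first by rewrite !take0; apply: sc_refl.
case: (ltngtP l.+1 n) hln => // hln _.
  have hF := IH l.+2 ltac:(lia) hln.
  have hlf : liftable delta rho (take l.+2 e) (take l.+1 e).
    have := @trunk1 0 l ltac:(lia).
    by rewrite (_ : (0 + 1 + l).+1 = l.+2); last by lia.
  have := lift_self (fun w h => hlf w (sc_trans (sc_sym rev hF) h)).
  rewrite !size_takel; try lia; last by rewrite size_drop; lia.
  move=> /(_ ltac:(lia)) h; apply: (sc_sym rev); move: h.
  rewrite (_ : (l.+2 - l.+1 = 1)%N); last by lia.
  move=> h; suff -> : take l.+1 (drop k.+1 W) = drop 1 (take l.+2 (drop k W)) by [].
  by rewrite -[k.+1]add1n -drop_drop take_drop addn1.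
have hl := J_long hJ (l := (k + 1 + n)%N) ltac:(lia).
have hsz : size (take (k + 1 + n) W) = (k + 1 + n)%N by rewrite size_takel //; lia.
have := lift_self hl; rewrite hsz => /(_ ltac:(lia)) h.
rewrite hln take_size; apply: (sc_sym rev); move: h.
have -> : (k + 1 + n - n = k.+1)%N by lia.
rewrite drop_take_; last by lia.
by have -> : (k + 1 + n - k.+1 = n)%N by lia.
Qed.

Lemma jword_Jw W : J W -> (n <= size W)%N -> Jw W.
Proof.
move=> hJ hs; split => //.
  have := J_factor hJ (k := 0) (l := n) ltac:(lia) (leqnn _).
  by rewrite drop0 take_size => /(sc_sym rev).
move=> k hk; split.
- rewrite size_takel // size_drop; lia.
- rewrite take_takel //.
  by have := J_factor hJ (k := k) (l := n) ltac:(lia) (leqnn _); rewrite take_size.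
- move=> w [s hw].
  have hl := J_long hJ (l := (k + n.+1)%N) ltac:(lia).
  set W' := take (k + n.+1) W in hl.
  have sW' : size W' = (k + n.+1)%N by rewrite size_takel //; lia.
  have [s0 hs0] := outw_surj delta inv (take k W') s.
  have [p [s1 [h1 h2]]] := hl _ (ex_intro _ s0 erefl).
  have ss1 : size s1 = n by rewrite (sc_size h2).
  have sp : size p = k.+1.
    by move: (congr1 size h1); rewrite size_cat size_ds sW' ss1; lia.
  exists (drop k p), s1; split => //.
  have : drop k (DS s0 W') = DS s (take n.+1 (drop k W)).
    by rewrite drop_ds ?sW' ?hs0 /W' ?drop_take_; try lia; rewrite (_ : (k + n.+1 - k = n.+1)%N) //; lia.
  rewrite hw h1 drop_cat ifT; last by lia.
  by move=> <-.
Qed.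

Lemma Jw_jword W : Jw W -> J W.
Proof.
move=> [hs h0 hw] l hl.
case: (leqP l n) => hln.
  left; rewrite size_takel; last by lia.
  split; first by lia.
  have := sc_take l (sc_sym rev h0); rewrite take_takel //.
right; split.
- by rewrite size_takel //; lia.
- by rewrite take_takel ?size_takel; try lia; apply: (sc_sym rev).
move=> w [s hw'].
have hz := hw (l - n.+1)%N ltac:(lia).
have [s' hs'] : exists s', drop (l - n.+1) w = DS s' (take n.+1 (drop (l - n.+1) W)).
  exists (outw delta rho (take (l - n.+1) (take l W)) s).
  rewrite -hw' drop_ds; last by rewrite size_takel; lia.
  rewrite drop_take_; last by lia.
  by rewrite (_ : (l - (l - n.+1) = n.+1)%N) //; lia.
have [_ _ hlz] := hz.
have [p [s1 [h1 h2]]] := hlz _ (ex_intro _ s' erefl).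
exists (take (l - n.+1) w ++ p), s1; split => //.
by rewrite -catA -h1 -hs' cat_take_drop.
Qed.

End JJ.


Lemma iterSr_ (T : Type) (f : T -> T) k x : iter k.+1 f x = iter k f (f x).
Proof. by elim: k => //= k <-. Qed.

Section Ret.
Variables (Q Sig : finType) (delta : Sig -> Q -> Q) (rho : Q -> Sig -> Sig).
Local Notation DW := (dw delta rho).
Local Notation DS := (ds delta rho).
Local Notation SC := (same_comp delta rho).
Hypothesis inv : invertible rho.
Hypothesis rev : reversible delta.
Variable e : seq Q.
Local Notation n := (size e).
Hypothesis n0 : (0 < n)%N.
Local Notation C := (legit_child_last delta rho e).
Hypothesis lab : forall f, C f -> edge_label delta rho f = 1%R.
Local Notation Jw := (Jw delta rho e).
Local Notation lastn := (lastnD e).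

Section One.
Variable z : seq Q.
Hypothesis hz : C z.

Definition tup (w : seq Q) : n.-tuple Q := insubd (in_tuple e) w.
Lemma val_tup w : size w = n -> val (tup w) = w.
Proof. by move=> h; rewrite val_insubd h eqxx. Qed.

Definition pi (x : n.-tuple Q) : n.-tuple Q :=
  if [pick t in compset delta rho z | take n (val t) == val x] is Some t
  then tup (drop 1 (val t)) else x.

Lemma inO (t : (size z).-tuple Q) : t \in compset delta rho z -> exists s, val t = DS s z.
Proof. by rewrite inE => /asboolP [s hs]; exists s. Qed.

Lemma pick_some (x : n.-tuple Q) : SC e (val x) ->
  exists2 t : (size z).-tuple Q, t \in compset delta rho z & take n (val t) = val x.
Proof.
move=> hx; have [s hs] := sc_trans (sc_sym rev (C_head rev hz)) hx.
exists (tupw delta rho z s); first exact: tupw_in.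
by rewrite val_tupw take_ds hs.
Qed.

Lemma size_inO (t : (size z).-tuple Q) : t \in compset delta rho z -> size (val t) = n.+1.
Proof. by move=> _; rewrite size_tuple (C_size hz). Qed.

Lemma pi_in (x : n.-tuple Q) : SC e (val x) -> SC e (val (pi x)).
Proof.
move=> hx; rewrite /pi; case: pickP => [t /andP [ht _]|]; last by move=> _.
have [s hs] := inO ht.
rewrite val_tup; last by rewrite size_drop (size_inO ht) subn1.
rewrite hs drop_ds; last by rewrite (C_size hz).
apply: sc_trans (C_tail n0 hz) _; by eexists.
Qed.

Lemma pi_out (x : n.-tuple Q) : ~ SC e (val x) -> pi x = x.
Proof.
move=> hx; rewrite /pi; case: pickP => [t /andP [ht /eqP ht2]|]; last by move=> _.
exfalso; apply: hx; rewrite -ht2; have [s ->] := inO ht.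
rewrite take_ds; apply: sc_trans (C_head rev hz) _; by eexists.
Qed.

Lemma pi_val (x : n.-tuple Q) (t : (size z).-tuple Q) : t \in compset delta rho z -> take n (val t) = val x ->
  val (pi x) = drop 1 (val t).
Proof.
move=> ht htx; rewrite /pi; case: pickP => [t' /andP [ht' /eqP ht2]|].
  rewrite val_tup; last by rewrite size_drop (size_inO ht') subn1.
  have [s1 h1] := inO ht; have [s2 h2] := inO ht'.
  suff : val t' = val t by move=> ->.
  rewrite h1 h2; apply: (C_headinj lab hz); by rewrite -h1 -h2 ht2 htx.
by move=> /(_ t); rewrite ht htx eqxx.
Qed.

Lemma pi_inj : injective pi.
Proof.
move=> x y hxy.
case: (pselect (SC e (val x))) => hx; case: (pselect (SC e (val y))) => hy.
- have [tx htx ex] := pick_some hx; have [ty hty ey] := pick_some hy.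
  have := congr1 val hxy; rewrite (pi_val htx ex) (pi_val hty ey).
  have [s1 h1] := inO htx; have [s2 h2] := inO hty.
  rewrite h1 h2 => /(C_tailinj inv rev n0 lab hz) h.
  by apply: val_inj; rewrite -ex -ey h1 h2 h.
- by exfalso; have := pi_in hx; rewrite hxy (pi_out hy) => /hy.
- by exfalso; have := pi_in hy; rewrite -hxy (pi_out hx) => /hx.
- by rewrite -(pi_out hx) -(pi_out hy).
Qed.

Lemma iter_pi_in k (x : n.-tuple Q) : SC e (val x) -> SC e (val (iter k pi x)).
Proof. by move=> hx; elim: k => //= k IH; apply: pi_in. Qed.

Lemma path_pi k (x : n.-tuple Q) : SC e (val x) ->
  exists Y, [/\ Jw Y, take n Y = val x & lastn Y = val (iter k pi x)].
Proof.
move=> hx; elim: k => [|k [Y [hY h1 h2]]].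
  exists (val x); split => /=.
  - split; first by rewrite size_tuple.
      by rewrite take_oversize ?size_tuple.
    by move=> k; rewrite size_tuple; lia.
  - by rewrite take_oversize ?size_tuple.
  - by rewrite /lastnD size_tuple subnn drop0.
have hx' := iter_pi_in k hx.
have [t ht et] := pick_some hx'.
have hCt : C (val t).
  have [s hs] := inO ht; rewrite hs; apply: (C_sc rev hz); by eexists.
have [hg hl] := Jw_glue n0 hY (Jw_C rev n0 hCt) (etrans h2 (esym et)).
exists (Y ++ drop n (val t)); split => //.
- by rewrite takel_cat //; case: hY.
- rewrite hl /= (pi_val ht et) /lastnD (size_inO ht).
  by rewrite (_ : (n.+1 - n = 1)%N) //; lia.
Qed.

Lemma ret1 : exists Y, [/\ Jw Y, take n Y = drop 1 z & lastn Y = take n z].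
Proof.
have sz := C_size hz.
pose a := tup (take n z).
have va : val a = take n z by rewrite val_tup // size_takel // sz.
have ha : SC e (val a) by rewrite va; apply: (sc_sym rev); case: hz.
have hpa : val (pi a) = drop 1 z.
  have zin := tupw_in delta rho z [::].
  by rewrite (pi_val zin); rewrite val_tupw.
have [M hM] := inj_period pi_inj a.
have [Y [hY h1 h2]] := path_pi M (pi_in ha).
exists Y; split => //; first by rewrite h1.
by rewrite h2 -iterSr_ hM.
Qed.

End One.

Lemma retW W : Jw W -> exists Y, [/\ Jw Y, take n Y = lastn W & lastn Y = take n W].
Proof.
move=> hW; have [hs _ _] := hW.
move: (subnKC hs) => /esym; move: (size W - n)%N => k.
elim: k W hW {hs} => [|k IH] W hW hsW.
  have e0 : lastn W = take n W.
    by rewrite /lastnD hsW addn0 subnn drop0 take_oversize // hsW addn0.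
  by exists W; split.
have hW' : Jw (take (n + k) W).
  have := Jw_factor rev n0 hW (i := 0) (l := (n + k)%N) ltac:(lia) ltac:(lia).
  by rewrite drop0.
have [Y' [hY' h1' h2']] := IH _ hW' ltac:(rewrite size_takel; lia).
have [_ _ hw] := hW.
have hz := hw k ltac:(lia).
have [Y1 [hY1 h11 h12]] := ret1 hz.
have e1 : drop 1 (take n.+1 (drop k W)) = lastn W.
  rewrite /lastnD -[n.+1]addn1 -take_drop drop_drop add1n.
  rewrite (_ : (size W - n = k.+1)%N); last by lia.
  by rewrite take_oversize // size_drop; lia.
have e2 : take n (take n.+1 (drop k W)) = lastn (take (n + k) W).
  rewrite take_takel // /lastnD size_takel; last by lia.
  rewrite drop_take_; last by lia.
  have -> : (n + k - n = k)%N by lia.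
  by have -> : (n + k - k = n)%N by lia.
have [hg hl] := Jw_glue n0 hY1 hY' (etrans h12 (etrans e2 (esym h1'))).
exists (Y1 ++ drop n Y'); split => //.
- by rewrite takel_cat ?h11 ?e1 //; case: hY1.
- by rewrite hl h2' take_takel //; lia.
Qed.

End Ret.


Section Core.
Variables (Q Sig : finType) (delta : Sig -> Q -> Q) (rho : Q -> Sig -> Sig).
Local Notation DW := (dw delta rho).
Local Notation DS := (ds delta rho).
Local Notation SC := (same_comp delta rho).
Hypothesis inv : invertible rho.
Hypothesis rev : reversible delta.
Variable e : seq Q.
Local Notation n := (size e).
Hypothesis n0 : (0 < n)%N.
Local Notation C := (legit_child_last delta rho e).
Hypothesis lab : forall f, C f -> edge_label delta rho f = 1%R.
Local Notation Jw := (Jw delta rho e).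
Local Notation lastn := (lastnD e).
Variable f1 : seq Q.
Hypothesis hf1 : C f1.

Lemma lext1 P : Jw P -> exists x0, Jw (x0 :: P).
Proof.
move=> hP; have [hs h0 hw] := hP.
have [s hs'] := sc_trans (sc_sym rev (C_tail n0 hf1)) h0.
have [s0 hs0] := outw_surj delta inv (take 1 f1) s.
have hCt : C (DS s0 f1) by apply: (C_sc rev hf1); exists s0.
have hdt : drop 1 (DS s0 f1) = take n P.
  by rewrite drop_ds ?hs0 // (C_size hf1).
have hl : lastn (DS s0 f1) = take n P.
  rewrite -hdt /lastnD (C_size hCt).
  by rewrite (_ : (n.+1 - n = 1)%N) //; lia.
have [hg _] := Jw_glue n0 (Jw_C rev n0 hCt) hP hl.
move: hg hdt; case: (DS s0 f1) => [|x0 r] hg hdt.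
  by move: hdt; rewrite /= => /(congr1 size); rewrite /= size_takel //; lia.
exists x0; move: hg; rewrite /= drop0 in hdt.
by rewrite cat_cons hdt cat_take_drop.
Qed.

Lemma lextk k P : Jw P -> exists c, size c = k /\ Jw (c ++ P).
Proof.
move=> hP; elim: k => [|k [c [hc hJ]]]; first by exists [::].
have [x0 hx] := lext1 hJ; exists (x0 :: c); split => //=; by rewrite hc.
Qed.

Lemma coreB P a u b : Jw P -> P = a ++ u ++ b -> exists z, Jw (P ++ z ++ u).
Proof.
move=> hP EP; have [hsP _ _] := hP.
have [c [hc hW]] := lextk n hP.
set W := c ++ P in hW.
set G := drop (size a) (c ++ a).
have sG : size G = n by rewrite size_drop size_cat hc; lia.
have ED : drop (size a) W = G ++ u ++ b.
  by rewrite /W EP catA drop_cat size_cat hc ifT //; lia.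
have sW : size W = (n + size P)%N by rewrite size_cat hc.
have hD : Jw (drop (size a) W).
  have := Jw_factor rev n0 hW (i := size a) (l := (size W - size a)%N).
  rewrite take_oversize; last by rewrite size_drop.
  apply; rewrite ?sW ?EP ?size_cat; lia.
have [Y [hY h1 h2]] := retW inv rev n0 lab hD.
have lD : lastn (drop (size a) W) = lastn P.
  rewrite /lastnD drop_drop size_drop /W drop_cat size_cat hc ifF; last first.
    apply/negbTE; rewrite -leqNgt; lia.
  have sa : (size a <= size P)%N by rewrite EP size_cat; lia.
  congr drop; lia.
have tD : take n (drop (size a) W) = G by rewrite ED take_size_cat.
have [hg1 hl1] := Jw_glue n0 hP hY (etrans (esym lD) (esym h1)).
have hGu : Jw (G ++ u).
  have := Jw_factor rev n0 hD (i := 0) (l := (n + size u)%N).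
  rewrite drop0 ED catA takel_cat ?size_cat ?sG // take_oversize ?size_cat ?sG //.
  apply; rewrite ?size_drop ?sW ?EP ?size_cat; lia.
have [hg2 _] := Jw_glue n0 hg1 hGu (etrans hl1 (etrans h2 (etrans tD (esym (take_size_cat _ sG))))).
exists (drop n Y); move: hg2.
by rewrite drop_size_cat // catA.
Qed.

Lemma fixprop W g k : Jw W -> (n <= k < size W)%N ->
  DS g (take k W) = take k W -> DS g (take k.+1 W) = take k.+1 W.
Proof.
move=> [hs h0 hw] hk hfix.
set m := (k - n)%N.
have hz := hw m ltac:(lia).
set zw := take n.+1 (drop m W) in hz.
have E1 : take k.+1 W = take m W ++ zw.
  by rewrite -takeD; congr take; lia.
have E2 : take k W = take m W ++ take n zw.
  by rewrite /zw take_takel // -takeD; congr take; lia.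
move: hfix; rewrite E1 E2 !ds_cat => /eqP; rewrite eqseq_cat ?size_ds //.
case/andP => /eqP -> /eqP h2; congr (_ ++ _).
have := C_headinj lab hz (s1 := outw delta rho (take m W) g) (s2 := [::]).
by rewrite !take_ds h2 => ->.
Qed.

End Core.


Theorem theorem5p7 (Q Sig : finType) (delta : Sig -> Q -> Q) (rho : Q -> Sig -> Sig) :
  (0 < #|Q|)%N -> (0 < #|Sig|)%N ->
  connected_automaton delta -> bireversible delta rho ->
  (forall b, branch delta rho b -> active_branch delta rho b ->
             ~ self_liftable_branch delta rho b) ->
  forall e : seq Q, jungle_trunk delta rho e ->
  forall S : seq Q -> Prop, liana delta rho e S ->
  forall t u v : seq Q, S (t ++ u ++ v) ->
  exists w : seq Q, S (t ++ u ++ v ++ w ++ u).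
Proof.
move=> _ _ _ [inv rev _] _ e [n0 trunk1 [f1 [_ [hf1 _ _]]] lab] S
  [w0 [L [hw0 hL hS hSJ hU]]] t u v hp.
set n := size e.
have sw0 : size w0 = n by rewrite /n (sc_size hw0).
have Spre : forall s k, S s -> S (take k s).
  move=> s k /hS [hpre|[l [hl ->]]]; apply/hS.
    by left; apply: prefix_trans (prefix_take _ _) hpre.
  case: (leqP k (size w0)) => hk.
    by left; rewrite takel_cat //; apply: prefix_take.
  right; exists (take (k - size w0) l); split.
    by apply: (hL _ (drop (k - size w0) l)); rewrite cat_take_drop.
  by rewrite take_cat ltnNge (ltnW hk).
set p := t ++ u ++ v in hp.
have [P [hSP hsP hpP]] : exists P, [/\ S P, (n <= size P)%N & prefix p P].
  case/hS: (hp) => [hpre|[l [hl Ep]]].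
    by exists w0; split => //; [apply/hS; left; apply: prefix_refl | rewrite sw0].
  exists p; split => //; last by apply: prefix_refl.
  by rewrite Ep size_cat sw0; lia.
have hJP := jword_Jw inv rev n0 trunk1 (hSJ _ hSP) hsP.
have [r Er] := prefixP hpP.
have EP : P = t ++ u ++ (v ++ r) by rewrite Er /p -!catA.
have [z hz] := coreB inv rev n0 lab hf1 hJP EP.
set W := P ++ z ++ u in hz.
have hJW := Jw_jword rev n0 hz.
have [s [[hSs hsW] huniq]] := hU _ hJW.
have tW : take (size P) W = P by rewrite /W take_size_cat.
have htake : take (size P) s = P.
  have [s' [_ hu']] := hU _ (hSJ _ hSP).
  have e1 : s' = P by apply: hu'; split => //; apply: sc_refl.
  have e2 : s' = take (size P) s.
    by apply: hu'; split; [exact: Spre | rewrite -{2}tW; apply: sc_take].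
  by rewrite -e2 e1.
have [g hg] := sc_sym rev hsW.
have fixP : ds delta rho g (take (size P) W) = take (size P) W.
  by rewrite -take_ds hg htake tW.
have sWP : (size P <= size W)%N by rewrite /W size_cat; lia.
have fixall : forall k, (size P <= k <= size W)%N ->
    ds delta rho g (take k W) = take k W.
  move=> k /andP [hk1 hk2].
  elim: k hk1 hk2 => [|k IH] hk1 hk2.
    by rewrite take0; apply/nilP; rewrite /nilp size_ds.
  case: (ltngtP (size P) k.+1) hk1 => // hk _.
    apply: (fixprop n0 lab hz); [lia | apply: IH; lia].
  by rewrite -hk.
have := fixall (size W) ltac:(lia); rewrite take_size hg => Es.
exists (drop (size p) P ++ z).
suff -> : t ++ u ++ v ++ (drop (size p) P ++ z) ++ u = W by rewrite -Es.
by rewrite /W Er /p !catA drop_size_cat // -!catA.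
Qed.
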